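(* Let $N\ge n\ge 1$ be integers, let $l_1,\dots,l_N>0$, and let $U=(u_{ij})_{i,j=1}^{2N}$ be a unitary $2N\times 2N$ matrix. Consider the quantum graph $\Gamma_0$ consisting of a single vertex and $N$ finite edges (loops) of lengths $l_1,\dots,l_N$, each emanating from and ending at this vertex; its Hilbert space is $\bigoplus_{j=1}^N L^2([0,l_j])$, and the Hamiltonian $H=H_U$ acts as $-\mathrm{d}^2/\mathrm{d}x^2$ on each edge, with domain consisting of all $(f_1,\dots,f_N)\in\bigoplus_j W^{2,2}([0,l_j])$ satisfying $$(U-I)\Psi+i(U+I)\Psi'=0,$$ where $\Psi=(f_1(0),f_1(l_1),f_2(0),f_2(l_2),\dots,f_N(0),f_N(l_N))^T$ and $\Psi'=(f_1'(0),-f_1'(l_1),\dots,f_N'(0),-f_N'(l_N))^T$. Suppose there is $l_0>0$ such that $l_1,\dots,l_n$ are integer multiples of $l_0$. Let $M_{\mathrm{even}}$ be the $2N\times 2n$ matrix formed by the first $2n$ columns of $U$, except that for each $j\in\{1,\dots,n\}$ the entries in positions $(2j-1,2j)$ and $(2j,2j-1)$ are replaced by $u_{2j-1,2j}-1$ and $u_{2j,2j-1}-1$, respectively. If $\mathrm{rank}\,M_{\mathrm{even}}<2n$, then the spectrum of $H_U$ contains the eigenvalues $\epsilon=4m^2\pi^2/l_0^2$, $m\in\mathbb{N}$, and the multiplicity of these eigenvalues is at least $2n-\mathrm{rank}\,M_{\mathrm{even}}$.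
   Context: The boundary condition at the vertex is the general self-adjoint vertex coupling; $\Psi$ collects the boundary values at both ends of every edge and $\Psi'$ the corresponding outward derivatives, ordered so that entries $2j-1,2j$ refer to the two ends of the $j$-th edge. *)

(* Defs.v *)
From HB Require Import structures.
From mathcomp Require Import all_boot all_order all_algebra.
From mathcomp Require Import all_classical all_reals all_analysis.
From mathcomp.real_closed Require Import complex.
Set Implicit Arguments. Unset Strict Implicit. Unset Printing Implicit Defensive.
Import Order.TTheory GRing.Theory Num.Theory.
Local Open Scope ring_scope.

Section QG.
Variable R : realType.
Local Notation C := (R[i]).

Definition reF (f : R -> C) : R -> R := fun x => complex.Re (f x).
Definition imF (f : R -> C) : R -> R := fun x => complex.Im (f x).

Definition cderive (f : R -> C) : R -> C :=
  fun x => Complex (derive1 (reF f) x) (derive1 (imF f) x).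

Definition twice_derivable (f : R -> C) : Prop :=
  forall x : R,
    [/\ derivable (reF f) x 1, derivable (imF f) x 1,
        derivable (derive1 (reF f)) x 1 & derivable (derive1 (imF f)) x 1].

Definition unitary_mx (m : nat) (U : 'M[C]_m) : Prop :=
  U *m (map_mx (@conjc R) U)^T = 1%:M.

(* boundary value vector Psi (0-based: entry 2j is f_j(0), entry 2j+1 is f_j(l_j)) *)
Definition Psi (N : nat) (l : 'I_N -> R) (f : 'I_N -> R -> C) : 'cV[C]_(2 * N) :=
  \col_(i < 2 * N)
    match insub (i./2) : option 'I_N with
    | Some j => if odd i then f j (l j) else f j 0
    | None => 0
    end.

(* outward derivative vector Psi' : entry 2j is f_j'(0), entry 2j+1 is -f_j'(l_j) *)
Definition Psi' (N : nat) (l : 'I_N -> R) (f : 'I_N -> R -> C) : 'cV[C]_(2 * N) :=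
  \col_(i < 2 * N)
    match insub (i./2) : option 'I_N with
    | Some j => if odd i then - cderive (f j) (l j) else cderive (f j) 0
    | None => 0
    end.

(* f = (f_1,...,f_N) is an eigenfunction (possibly zero) of H_U with eigenvalue eps:
   each f_j is C^2-regular, solves -f_j'' = eps f_j on [0, l_j], and the
   vertex condition (U - I) Psi + i (U + I) Psi' = 0 holds. *)
Definition is_eigvec (N : nat) (U : 'M[C]_(2 * N)) (l : 'I_N -> R) (eps : R)
    (f : 'I_N -> R -> C) : Prop :=
  [/\ forall j, twice_derivable (f j),
      forall j x, 0 <= x <= l j ->
        - cderive (cderive (f j)) x = (eps%:C)%C * f j x
    & (U - 1%:M) *m Psi l f + ('i)%C *: ((U + 1%:M) *m Psi' l f) = 0].

(* linear independence of a finite family of elements of the Hilbert space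
   (functions are compared on their edges [0, l_j] only) *)
Definition lin_indep (N k : nat) (l : 'I_N -> R) (F : 'I_k -> 'I_N -> R -> C) : Prop :=
  forall c : 'I_k -> C,
    (forall j x, 0 <= x <= l j -> \sum_(r < k) c r * F r j x = 0) ->
    forall r, c r = 0.

End QG.

Lemma leq_double_mul (n N : nat) : (n <= N)%N -> (2 * n <= 2 * N)%N.
Proof. by move=> h; rewrite leq_mul2l h orbT. Qed.

(* M_even: first 2n columns of U, with entries (2j-1,2j) and (2j,2j-1) (1-based,
   j = 1..n) decreased by 1.  0-based: column k odd & row k-1, or column k even & row k+1. *)
Definition M_even (R : realType) (N n : nat) (h : (n <= N)%N) (U : 'M[R[i]]_(2 * N))
  : 'M[R[i]]_(2 * N, 2 * n) :=
  \matrix_(i < 2 * N, k < 2 * n)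
    (U i (widen_ord (leq_double_mul h) k)
     - (if (odd k && (i.+1 == k)) || (~~ odd k && (i == k.+1 :> nat)) then 1 else 0)).

(* Main.v *)
Require Import Defs.
From HB Require Import structures.
From mathcomp Require Import all_boot all_order all_algebra.
From mathcomp Require Import all_classical all_reals all_analysis.
From mathcomp.real_closed Require Import complex.
From mathcomp Require Import ring lra.
Import Order.TTheory GRing.Theory Num.Theory.
Local Open Scope ring_scope.

Section S.
Variable R : realType.

Lemma is_derive_lin (f : R -> R) (df k x : R) :
  is_derive (k * x) 1 f df -> is_derive x 1 (fun y => f (k * y)) (df * k).
Proof.
move=> hf.
have hl : derivable (fun y : R => k * y) x 1.
  by apply: derivableM => //; apply: derivable_cst.
have hf' : derivable f (k * x) 1 by apply: ex_derive.
have hc : derivable (f \o (fun y => k * y)) x 1.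
  apply/derivable1_diffP; apply: differentiable_comp; apply/derivable1_diffP => //.
split; first exact: hc.
rewrite -derive1E.
have := derive1_comp hl hf'. rewrite /comp => ->.
rewrite derive1E derive_val; congr (_ * _).
rewrite derive1E (_ : (fun y : R => k * y) = k *: (@id R)) //.
rewrite deriveZ; last exact: derivable_id.
by rewrite derive_id /GRing.scale /= mulr1.
Qed.
Local Notation C := (R[i]).

Definition hh (k p q : R) (x : R) : R := p * cos (k * x) + q * sin (k * x).

Lemma hh_der (k p q x : R) :
  is_derive x 1 (hh k p q) (hh k (k * q) (- (k * p)) x).
Proof.
have c1 : is_derive x 1 (fun y => cos (k*y)) (- sin (k*x) * k).
  exact: is_derive_lin (is_derive_cos _).
have s1 : is_derive x 1 (fun y => sin (k*y)) (cos (k*x) * k).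
  exact: is_derive_lin (is_derive_sin _).
have -> : hh k p q = p *: (fun y => cos (k*y)) + q *: (fun y => sin (k*y)) by [].
apply: is_derive_eq (is_deriveD (is_deriveZ p c1) (is_deriveZ q s1)) _.
rewrite /hh /GRing.scale /=; lra.
Qed.
Local Open Scope complex_scope.
Definition gg (k : R) (a b : C) (x : R) : C := a * (cos (k*x))%:C + b * (sin (k*x))%:C.

Lemma reF_gg k a b : reF (gg k a b) = hh k (complex.Re a) (complex.Re b).
Proof.
apply/funext => x; case: a => a1 a2; case: b => b1 b2; rewrite /reF /gg /hh /=.
by rewrite !mulr0 !subr0.
Qed.

Lemma imF_gg k a b : imF (gg k a b) = hh k (complex.Im a) (complex.Im b).
Proof.
apply/funext => x; case: a => a1 a2; case: b => b1 b2; rewrite /imF /gg /hh /=.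
by rewrite !mulr0 !add0r.
Qed.

Lemma cderive_gg k a b : cderive (gg k a b) = gg k (k%:C * b) (- (k%:C * a)).
Proof.
apply/funext => x; rewrite /cderive reF_gg imF_gg !derive1E.
have [_ ->] := hh_der k (complex.Re a) (complex.Re b) x.
have [_ ->] := hh_der k (complex.Im a) (complex.Im b) x.
case: a => a1 a2; case: b => b1 b2; rewrite /gg /hh /=.
congr (_ +i* _); ring.
Qed.
End S.
Arguments gg {R}. Arguments hh {R}. Arguments cderive_gg {R}. Arguments reF_gg {R}. Arguments imF_gg {R}. Arguments hh_der {R}. Arguments is_derive_lin {R}.

Local Open Scope complex_scope.

Definition tt_ (i : nat) : nat := if odd i then i.-1 else i.+1.

Lemma delta_eq (i k : nat) :
  ((odd k && (i.+1 == k)) || (~~ odd k && (i == k.+1 :> nat))) = (k == tt_ i).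
Proof.
rewrite /tt_; apply/idP/eqP.
- case/orP => /andP[ok /eqP e].
    by move: ok; rewrite -e /= => /negbTE ->.
  by move: ok; rewrite e /= => ->.
- move=> ->; case: (boolP (odd i)) => oi.
    apply/orP; right; case: i oi => [//|i] /= oi.
    by rewrite oi eqxx.
  by apply/orP; left; rewrite /= oi eqxx.
Qed.

Lemma sum_delta (R : realType) (p t : nat) (e : nat -> R[i]) :
  \sum_(0 <= k < p) (if k == t then e k else 0) = if (t < p)%N then e t else 0.
Proof.
elim: p => [|p IH]; first by rewrite big_geq.
rewrite big_nat_recr //= IH.
case: (ltngtP t p) => h.
- by rewrite (ltn_trans h (ltnSn p)) addr0.
- by rewrite ltnS leqNgt h addr0.
- by rewrite h ltnSn add0r.
Qed.

Lemma vertex_cond (R : realType) (N n : nat) (hnN : (n <= N)%N)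
  (U : 'M[R[i]]_(2*N)) (e : nat -> R[i])
  (he : forall k, (2*n <= k)%N -> e k = 0)
  (hM : forall i : 'I_(2*N), \sum_(kk < 2*n) M_even hnN U i kk * e kk = 0)
  (P Q : 'cV[R[i]]_(2*N))
  (hP : forall i : 'I_(2*N), P i 0 + 'i * Q i 0 = e i)
  (hQ : forall i : 'I_(2*N), P i 0 - 'i * Q i 0 = e (tt_ i)) :
  (U - 1%:M) *m P + 'i *: ((U + 1%:M) *m Q) = 0.
Proof.
have -> : (U - 1%:M) *m P + 'i *: ((U + 1%:M) *m Q) = U *m (P + 'i *: Q) - (P - 'i *: Q).
  rewrite mulmxBl mulmxDl !mul1mx scalerDr scalemxAr mulmxDr.
  by rewrite opprB addrACA (addrC (- P)).
apply/matrixP => i c; rewrite (ord1 c) !mxE.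
under eq_bigr => kk _ do rewrite !mxE hP.
rewrite hQ.
pose Ui (k : nat) : R[i] := if insub k is Some o then U i o else 0.
have h1 : \sum_(kk < 2 * N) U i kk * e kk = \sum_(0 <= k < 2 * n) Ui k * e k.
  rewrite (eq_bigr (fun kk : 'I_(2 * N) => Ui kk * e kk)) => [|kk _]; last by rewrite /Ui valK.
  rewrite -(big_mkord xpredT (fun k => Ui k * e k)).
  rewrite (@big_cat_nat _ _ _ (2 * n) 0 (2 * N) _ _ (leq0n (2 * n)) (leq_double_mul hnN)) /=.
  rewrite [X in _ + X]big_nat_cond [X in _ + X]big1 ?addr0 // => k /andP[/andP[hk _] _].
  by rewrite he ?mulr0.
have h2 : \sum_(kk < 2 * n) M_even hnN U i kk * e kk
      = \sum_(0 <= k < 2 * n) Ui k * e k - e (tt_ i).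
  rewrite (eq_bigr (fun kk : 'I_(2 * n) => Ui kk * e kk - (if kk == tt_ i :> nat then e kk else 0))) => [|kk _].
    rewrite big_split /= sumrN -(big_mkord xpredT (fun k => Ui k * e k)).
    rewrite -(big_mkord xpredT (fun k => if k == tt_ i then e k else 0)) sum_delta.
    case: ltnP => // h; by rewrite he // subr0.
  rewrite mxE delta_eq /Ui.
  have := valK (widen_ord (leq_double_mul hnN) kk); rewrite /= => ->.
  by rewrite mulrBl; case: eqP => _; rewrite ?mul1r ?mul0r.
by rewrite h1 -h2 hM.
Qed.

Lemma kernel_basis (R : realType) (N n : nat) (hnN : (n <= N)%N) (U : 'M[R[i]]_(2*N)) :
  exists v : 'I_(2 * n - \rank (M_even hnN U)) -> 'I_(2 * n) -> R[i],
    (forall r (i : 'I_(2 * N)), \sum_(kk < 2 * n) M_even hnN U i kk * v r kk = 0) /\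
    (forall c : 'I_(2 * n - \rank (M_even hnN U)) -> R[i],
        (forall kk, \sum_r c r * v r kk = 0) -> forall r, c r = 0).
Proof.
set M := M_even hnN U.
set K := kermx M^T.
have eqd : \rank K = (2 * n - \rank M)%N by rewrite mxrank_ker mxrank_tr.
rewrite -eqd.
set B := row_base K.
have hB : B *m M^T = 0.
  have : (B <= K)%MS by rewrite eq_row_base submx_refl.
  by case/submxP => D ->; rewrite -mulmxA mulmx_ker mulmx0.
exists (fun r kk => B r kk); split.
  move=> r i.
  have e0 : (B *m M^T) r i = 0 by rewrite hB mxE.
  rewrite -[RHS]e0 [RHS]mxE.
  by apply: eq_bigr => kk _; rewrite [M^T _ _]mxE mulrC.
move=> c hc r.
have h0 : (\row_q c q) *m B = 0.
  apply/matrixP => a kk; rewrite (ord1 a) !mxE -[RHS](hc kk).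
  by apply: eq_bigr => q _; rewrite mxE.
have := row_free_inj (row_base_free K) (etrans h0 (esym (mul0mx _ B))).
by move/matrixP/(_ 0 r); rewrite !mxE.
Qed.

Section S2.
Variable R : realType.
Local Notation C := (R[i]).

Lemma gg_second (k : R) (a b : C) (x : R) :
  - cderive (cderive (gg k a b)) x = ((k ^+ 2)%:C) * gg k a b x.
Proof.
rewrite !cderive_gg; case: a => a1 a2; case: b => b1 b2; rewrite /gg /=.
congr (_ +i* _); ring.
Qed.

Lemma gg_at (k : R) (a b : C) (x : R) : cos (k * x) = 1 -> sin (k * x) = 0 ->
  gg k a b x = a /\ cderive (gg k a b) x = k%:C * b.
Proof.
move=> hc hs; rewrite cderive_gg /gg hc hs.
have c1 : (1 : R)%:C = 1 by [].
have c0 : (0 : R)%:C = 0 by [].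
by rewrite c1 c0 !mulr0 !addr0 !mulr1.
Qed.


Lemma gg00 (k : R) (x : R) : gg k 0 0 x = 0.
Proof. by rewrite /gg !mul0r addr0. Qed.

Lemma gg_half (k : R) (a b : C) : k != 0 -> gg k a b (pi / 2 / k) = b.
Proof.
move=> hk; rewrite /gg; have -> : k * (pi / 2 / k) = pi / 2 by field.
have c1 : (1 : R)%:C = 1 by [].
have c0 : (0 : R)%:C = 0 by [].
by rewrite cos_pihalf sin_pihalf c1 c0 mulr0 add0r mulr1.
Qed.

Lemma gg_twice (k : R) (a b : C) : twice_derivable (gg k a b).
Proof.
move=> x; split.
- by rewrite reF_gg; case: (hh_der k (complex.Re a) (complex.Re b) x).
- by rewrite imF_gg; case: (hh_der k (complex.Im a) (complex.Im b) x).
- have -> : derive1 (reF (gg k a b)) = reF (cderive (gg k a b)) by [].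
  by rewrite cderive_gg reF_gg; case: (hh_der k (complex.Re (k%:C * b)) (complex.Re (- (k%:C * a))) x).
- have -> : derive1 (imF (gg k a b)) = imF (cderive (gg k a b)) by [].
  by rewrite cderive_gg imF_gg; case: (hh_der k (complex.Im (k%:C * b)) (complex.Im (- (k%:C * a))) x).
Qed.

Lemma cos_2piz (z : int) :
  cos ((pi *+ 2) * z%:~R) = 1 :> R /\ sin ((pi *+ 2) * z%:~R) = 0 :> R.
Proof.
have hn : forall n : nat, cos ((pi *+ 2) * n%:R) = 1 :> R /\ sin ((pi *+ 2) * n%:R) = 0 :> R.
  move=> n; rewrite mulr_natr.
  have := periodicn (@cosD2pi R) n 0; have := periodicn (@sinD2pi R) n 0.
  by rewrite !add0r cos0 sin0 => -> ->.
case: z => n; first exact: hn.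
rewrite NegzE mulrNz mulrN cosN sinN.
by have [-> ->] := hn n.+1; rewrite oppr0.
Qed.
End S2.

Theorem theorem1 (R : realType) (N n : nat) (hn1 : (1 <= n)%N) (hnN : (n <= N)%N)
    (l : 'I_N -> R) (hl : forall j, 0 < l j)
    (U : 'M[R[i]]_(2 * N)) (hU : unitary_mx U)
    (l0 : R) (hl0 : 0 < l0)
    (hmult : forall j : 'I_N, (j < n)%N -> exists k : int, l j = k%:~R * l0)
    (hrank : (\rank (M_even hnN U) < 2 * n)%N) :
  forall m : nat, (0 < m)%N ->
    let eps := 4 * (m%:R) ^+ 2 * pi ^+ 2 / l0 ^+ 2 in
    (exists f : 'I_N -> R -> R[i],
        is_eigvec U l eps f /\ exists j x, 0 <= x <= l j /\ f j x != 0)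
    /\
    (exists F : 'I_(2 * n - \rank (M_even hnN U)) -> 'I_N -> R -> R[i],
        (forall r, is_eigvec U l eps (F r)) /\ lin_indep l F).
Proof.
move=> m hm eps.
have pi0 : 0 < pi :> R := pi_gt0 R.
pose k : R := (pi *+ 2) * m%:R / l0.
have m1 : 1 <= m%:R :> R by rewrite ler1n.
have k0 : 0 < k by rewrite /k mulr2n divr_gt0 // mulr_gt0 //; lra.
have kn0 : k != 0 by rewrite gt_eqF.
have kC : k%:C != 0 :> R[i].
  by apply: contra kn0 => /eqP h; apply/eqP; apply: complexI.
have iC : 'i%C != 0 :> R[i].
  by apply/eqP => /(congr1 (@complex.Im R)) /= /eqP; rewrite oner_eq0.
have twoC : 2 != 0 :> R[i] by rewrite pnatr_eq0.
have heps : eps = k ^+ 2.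
  rewrite /eps /k mulr2n; field; exact: lt0r_neq0.
have [v [hv hind]] := @kernel_basis R N n hnN U.
pose e r (i : nat) : R[i] := if insub i is Some kk then v r kk else 0.
pose al r (j : nat) : R[i] := (e r j.*2 + e r j.*2.+1) / 2.
pose be r (j : nat) : R[i] := (e r j.*2 - e r j.*2.+1) / (2 * 'i * k%:C).
pose F r (j : 'I_N) := gg k (al r j) (be r j).
have he : forall r i, (2 * n <= i)%N -> e r i = 0.
  by move=> r i hi; rewrite /e insubF // ltnNge hi.
have hev : forall r (kk : 'I_(2 * n)), e r kk = v r kk.
  by move=> r kk; rewrite /e valK.
have hfar : forall r (j : 'I_N), (n <= j)%N -> al r j = 0 /\ be r j = 0.
  move=> r j hj.
  have h1 : (2 * n <= (j : nat).*2)%N by rewrite -mul2n leq_mul2l hj.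
  have h2 : (2 * n <= (j : nat).*2.+1)%N by apply: leqW.
  by rewrite /al /be !he // addr0 subr0 !mul0r.
have htrig : forall j : 'I_N, (j < n)%N -> cos (k * l j) = 1 /\ sin (k * l j) = 0.
  move=> j hj; have [z hz] := hmult j hj.
  have -> : k * l j = (pi *+ 2) * (m%:Z * z)%:~R.
    have hm' : (m%:Z)%:~R = m%:R :> R by [].
    rewrite hz /k intrM hm'; field; exact: lt0r_neq0.
  exact: cos_2piz.
have hend : forall r (j : 'I_N), F r j (l j) = al r j /\ cderive (F r j) (l j) = k%:C * be r j.
  move=> r j; case: (ltnP j n) => hj.
  - by have [c s] := htrig j hj; apply: gg_at.
  - rewrite /F; have [-> ->] := hfar r j hj.
    by rewrite cderive_gg !mulr0 oppr0 !gg00.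
have hzero : forall r (j : 'I_N), F r j 0 = al r j /\ cderive (F r j) 0 = k%:C * be r j.
  by move=> r j; apply: gg_at; rewrite mulr0 ?cos0 ?sin0.
have eig : forall r, is_eigvec U l eps (F r).
  move=> r; split.
  - by move=> j; apply: gg_twice.
  - by move=> j x _; rewrite gg_second heps.
  apply: (@vertex_cond R N n hnN U (e r)).
  - exact: he r.
  - move=> i; rewrite -[RHS](hv r i); apply: eq_bigr => kk _; by rewrite hev.
  - move=> i; rewrite /Psi /Psi' !mxE.
    case: insubP => [j _ hj | hn]; last first.
      by exfalso; move: hn; rewrite ltn_half_double -mul2n ltn_ord.
    have [h1 h2] := hend r j; have [h3 h4] := hzero r j.
    have hi : (i : nat) = (odd i + (j : nat).*2)%N by rewrite hj odd_double_half.
    rewrite [in RHS]hi; case: (odd i) => /=; rewrite ?add0n ?h1 ?h2 ?h3 ?h4 /al /be.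
      by field; rewrite ?iC ?kC ?twoC.
    by field; rewrite ?iC ?kC ?twoC.
  - move=> i; rewrite /Psi /Psi' !mxE.
    case: insubP => [j _ hj | hn]; last first.
      by exfalso; move: hn; rewrite ltn_half_double -mul2n ltn_ord.
    have [h1 h2] := hend r j; have [h3 h4] := hzero r j.
    have hi : (i : nat) = (odd i + (j : nat).*2)%N by rewrite hj odd_double_half.
    rewrite /tt_ [in RHS]hi; case: (odd i) => /=; rewrite ?odd_double /= ?add0n ?h1 ?h2 ?h3 ?h4 /al /be.
      by field; rewrite ?iC ?kC ?twoC.
    by field; rewrite ?iC ?kC ?twoC.
have indep : lin_indep l F.
  move=> c hc; apply: hind => kk.
  have hjN : (kk./2 < N)%N.
    by rewrite ltn_half_double -mul2n (leq_trans (ltn_ord kk) (leq_double_mul hnN)).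
  have hjn : (kk./2 < n)%N by rewrite ltn_half_double -mul2n ltn_ord.
  pose j := Ordinal hjN.
  have s0 : \sum_r c r * al r j = 0.
    rewrite -[RHS](hc j 0); last by rewrite lexx (ltW (hl j)).
    by apply: eq_bigr => r _; have [-> _] := hzero r j.
  have hx0 : 0 <= pi / 2 / k <= l j.
    have [z hz] := hmult j hjn.
    have z1 : 1 <= z%:~R :> R.
      rewrite ler1z -gtz0_ge1 -(ltr0z R).
      by have := hl j; rewrite hz pmulr_lgt0.
    have -> : pi / 2 / k = l0 / (4 * m%:R).
      have m0 : m%:R != 0 :> R by rewrite gt_eqF //; lra.
      have l0n : l0 != 0 by rewrite gt_eqF.
      have p0n : pi != 0 :> R by rewrite gt_eqF.
      rewrite /k mulr2n; move: p0n; set p := pi => p0n.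
      clearbody p; by field; rewrite ?m0 ?l0n ?p0n.
    apply/andP; split.
      by rewrite divr_ge0 // ?ltW //; lra.
    rewrite ler_pdivrMr; last by lra.
    have h4 : 1 <= z%:~R * (4 * m%:R) :> R by nra.
    by rewrite hz mulrAC ler_peMl // ltW.
  have s1 : \sum_r c r * be r j = 0.
    rewrite -[RHS](hc j (pi / 2 / k) hx0).
    by apply: eq_bigr => r _; rewrite /F gg_half.
  pose s : R[i] := if odd kk then - ('i * k%:C) else 'i * k%:C.
  have hv2 : forall r, v r kk = al r j + s * be r j.
    move=> r; rewrite -hev.
    have hi : (kk : nat) = (odd kk + (j : nat).*2)%N by rewrite /= odd_double_half.
    rewrite {1}hi /s /al /be; case: (odd kk) => /=; rewrite ?add0n.
      by field; rewrite ?iC ?kC ?twoC.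
    by field; rewrite ?iC ?kC ?twoC.
  rewrite (eq_bigr (fun r => c r * al r j + s * (c r * be r j))); last first.
    by move=> r _; rewrite hv2; ring.
  by rewrite big_split /= -mulr_sumr s0 s1 mulr0 addr0.
have D0 : (0 < 2 * n - \rank (M_even hnN U))%N by rewrite subn_gt0.
split; last by exists F; split.
pose r0 := Ordinal D0.
exists (F r0); split; first exact: eig r0.
apply: contrapT => hno.
have H : forall (j : 'I_N) x, 0 <= x <= l j ->
    \sum_r (fun r => (r == r0)%:R) r * F r j x = 0.
  move=> j x hx; rewrite (bigD1 r0) //= mul1r big1 ?addr0.
    apply/eqP; apply: contraT => hne; case: hno; exists j, x; by split.
  by move=> r /negbTE ->; rewrite mul0r.
have := indep _ H r0 => /= h.
by move/eqP: h; rewrite oner_eq0.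
Qed.
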